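(* Let $G$ be a labeled complete bipartite graph (every edge labeled $+$ or $-$) with partite sets $V_1,V_2$, let $\alpha,\gamma$ be real parameters with $0<\gamma<\alpha<1/2$, and let $x$ be any fractional clustering of $G$. Let $\mathcal{C}$ be the clustering produced by the following algorithm (Algorithm 2), where ties in the choice of pivot are broken arbitrarily: Set $S=V(G)$. While $V_1\cap S\neq\emptyset$: for each $u\in V_1\cap S$ let $T_u=\{w\in S\setminus\{u\} : x_{uw}\le\alpha\}$ and $T^*_u=\{w\in V_2\cap S : x_{uw}\le\gamma\}$; choose a pivot $u\in V_1\cap S$ maximizing $|T^*_u|$ and let $T=T_u$; if $\sum_{w\in V_2\cap T}x_{uw}\ge\alpha|V_2\cap T|/2$, output the singleton cluster $\{u\}$ and set $S=S\setminus\{u\}$; otherwise output the cluster $\{u\}\cup T$ and set $S=S\setminus(\{u\}\cup T)$. After the loop, output each remaining vertex of $V_2\cap S$ as a singleton cluster. Then there is a constant $c$ depending only on $\alpha$ and $\gamma$ such that $\mathrm{err}(\mathcal{C})_v\le c\,\mathrm{err}(x)_v$ for all $v\in V_1$.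
   Context: A (discrete) clustering of $G$ is a partition of $V(G)$. A fractional clustering of $G$ is a vector $x$ indexed by all unordered pairs of distinct vertices of $G$ (not only edges) with $x_{uv}\in[0,1]$ for all pairs and $x_{vz}\le x_{vw}+x_{wz}$ for all distinct $v,w,z$; by convention $x_{uu}=0$. For vertex $v$, $N^+(v)$ and $N^-(v)$ denote the sets of vertices joined to $v$ by a $+$ edge, resp. a $-$ edge. The error vector of $x$ is the vector indexed by $V(G)$ with $\mathrm{err}(x)_v=\sum_{w\in N^+(v)}x_{vw}+\sum_{w\in N^-(v)}(1-x_{vw})$. For a clustering $\mathcal{C}$, $x^{\mathcal{C}}_{uv}=0$ if $u,v$ lie in the same cluster and $1$ otherwise, and $\mathrm{err}(\mathcal{C})=\mathrm{err}(x^{\mathcal{C}})$, i.e. the number of erroneous edges at each vertex ($+$ edges between clusters, $-$ edges within clusters). *)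

(* Defs.v *)
From HB Require Import structures.
From mathcomp Require Import all_boot all_order all_algebra.
From mathcomp Require Import reals.
Set Implicit Arguments. Unset Strict Implicit. Unset Printing Implicit Defensive.
Import Order.TTheory GRing.Theory Num.Theory.
Local Open Scope ring_scope.

Section Clustering.
Variables (R : realType) (V : finType).

(* A labeled complete bipartite graph with parts V1 and V2 := ~: V1:
   every pair {u,w} with u, w on different sides is an edge, labeled +
   if [pos u w] and - otherwise.  [pos] must be symmetric. *)
Definition labels_symmetric (pos : V -> V -> bool) : Prop :=
  forall u w, pos u w = pos w u.

Definition crossing (V1 : {set V}) (u w : V) : bool := (u \in V1) != (w \in V1).

Definition Npos (V1 : {set V}) (pos : V -> V -> bool) (v : V) : {set V} :=
  [set w | crossing V1 v w && pos v w].
Definition Nneg (V1 : {set V}) (pos : V -> V -> bool) (v : V) : {set V} :=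
  [set w | crossing V1 v w && ~~ pos v w].

(* Fractional clustering: a function on pairs (symmetric, so indexed by
   unordered pairs), values in [0,1], triangle inequality for distinct
   vertices, and x_uu = 0 by convention. *)
Definition fractional_clustering (x : V -> V -> R) : Prop :=
  [/\ forall u, x u u = 0,
      forall u v, x u v = x v u,
      forall u v, 0 <= x u v <= 1 &
      forall v w z, v != w -> w != z -> v != z -> x v z <= x v w + x w z].

Definition err (V1 : {set V}) (pos : V -> V -> bool) (x : V -> V -> R) (v : V) : R :=
  \sum_(w in Npos V1 pos v) x v w + \sum_(w in Nneg V1 pos v) (1 - x v w).

Definition xC (C : seq {set V}) (u v : V) : R :=
  if has (fun A : {set V} => (u \in A) && (v \in A)) C then 0 else 1.

Definition Tset (x : V -> V -> R) (alpha : R) (S : {set V}) (u : V) : {set V} :=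
  [set w in S :\ u | x u w <= alpha].
Definition Tstar (V1 : {set V}) (x : V -> V -> R) (gamma : R) (S : {set V}) (u : V)
  : {set V} :=
  [set w in ~: V1 :&: S | x u w <= gamma].

(* [alg2_run V1 x alpha gamma S C] : starting from current set S, a run of
   the loop (with arbitrary tie-breaking of the pivot) followed by the final
   step outputs the list of clusters C. *)
Inductive alg2_run (V1 : {set V}) (x : V -> V -> R) (alpha gamma : R)
  : {set V} -> seq {set V} -> Prop :=
| alg2_end (S : {set V}) :
    V1 :&: S = set0 ->
    alg2_run V1 x alpha gamma S [seq [set w] | w <- enum (~: V1 :&: S)]
| alg2_step (S : {set V}) (u : V) (rest : seq {set V}) :
    u \in V1 :&: S ->
    (forall u', u' \in V1 :&: S ->
       #|Tstar V1 x gamma S u'| <= #|Tstar V1 x gamma S u|)%N ->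
    let T := Tset x alpha S u in
    let cl := if alpha * #|~: V1 :&: T|%:R / 2 <= \sum_(w in ~: V1 :&: T) x u w
              then [set u] else u |: T in
    alg2_run V1 x alpha gamma (S :\: cl) rest ->
    alg2_run V1 x alpha gamma S (cl :: rest).

End Clustering.

(* Main.v *)
Require Import Defs.
From HB Require Import structures.
From mathcomp Require Import all_boot all_order all_algebra.
From mathcomp Require Import reals.
From mathcomp Require Import ring lra.
Import Order.TTheory GRing.Theory Num.Theory.
Local Open Scope ring_scope.
Set Implicit Arguments. Unset Strict Implicit. Unset Printing Implicit Defensive.

Section P.
Variables (R : realType) (alpha gamma : R).
Hypotheses (Hg : 0 < gamma) (Hga : gamma < alpha) (Ha : alpha < 1/2).
Variables (V : finType) (V1 : {set V}) (pos : V -> V -> bool) (x : V -> V -> R).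
Hypothesis Hx : fractional_clustering x.
Variable v : V.
Hypothesis Hv : v \in V1.

Ltac prep := have ? := Ha; have ? := Hg; have ? := Hga.

Definition mm := gamma * (1 - 2 * alpha).

Lemma mm_gt0 : 0 < mm.
Proof. prep; rewrite /mm; apply: mulr_gt0 => //. lra. Qed.
Lemma mm_le_g : mm <= gamma.
Proof. prep; rewrite /mm; have h : 0 < gamma * alpha by apply: mulr_gt0 => //; lra.
lra. Qed.
Lemma mm_le_a : mm <= 1 - 2 * alpha.
Proof. prep; rewrite /mm; have h : 0 <= (1 - gamma) * (1 - 2 * alpha) by apply: mulr_ge0; lra.
lra. Qed.

Definition ee (y : V -> V -> R) w := if pos v w then y v w else 1 - y v w.

Lemma x01 a b : 0 <= x a b <= 1.
Proof. by case: Hx. Qed.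
Lemma xsym a b : x a b = x b a.
Proof. by case: Hx. Qed.
Lemma xtri a b d : a != b -> b != d -> a != d -> x a d <= x a b + x b d.
Proof. by case: Hx => _ _ _; apply. Qed.

Lemma ee_ge0 w : 0 <= ee x w.
Proof. rewrite /ee; have /andP[h1 h2] := x01 v w; case: (pos v w); lra. Qed.

Lemma combine (F E s k : R) : 0 < s -> 0 <= E -> 0 <= k -> k * mm <= 4 * s ->
  s * F <= k * E -> F <= (4 / mm) * E.
Proof.
move=> s0 E0 k0 hk hF.
have m0 := mm_gt0.
rewrite -(ler_pM2l (mulr_gt0 s0 m0)).
have -> : s * mm * (4 / mm * E) = 4 * s * E.
  by field; rewrite gt_eqF.
nra.
Qed.

Lemma sum_scale (A : {set V}) (f e g : V -> R) (s mu : R) : 0 <= mu ->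
  \sum_(w in A) g w <= 0 -> (forall w, w \in A -> s * f w <= e w + mu * g w) ->
  s * \sum_(w in A) f w <= \sum_(w in A) e w.
Proof.
move=> mu0 hg hp.
rewrite mulr_sumr; apply: le_trans (ler_sum _ hp) _.
rewrite big_split /= -mulr_sumr.
have : mu * \sum_(w in A) g w <= 0 by apply: mulr_ge0_le0.
lra.
Qed.

Lemma sum_sub (A B : {set V}) (f : V -> R) : B \subset A ->
  (forall w, w \in A -> 0 <= f w) -> \sum_(w in B) f w <= \sum_(w in A) f w.
Proof.
move=> /subsetP BA f0.
rewrite [X in _ <= X](bigID (mem B)) /=.
have -> : \sum_(i in A | i \in B) f i = \sum_(i in B) f i.
  apply: eq_bigl => w /=; case: (boolP (w \in B)) => h; last by rewrite andbF.
  by rewrite (BA _ h).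
rewrite lerDl; apply: sumr_ge0 => w /andP[h _]; exact: f0.
Qed.

Lemma sum_ind (A B : {set V}) : B \subset A ->
  \sum_(w in A) (if w \in B then 1 else 0 : R) = #|B|%:R.
Proof.
move=> /subsetP BA.
rewrite -big_mkcondr /=.
transitivity (\sum_(w in B) (1:R)); last by rewrite sumr_const.
apply: eq_bigl => w /=; case: (boolP (w \in B)) => h; last by rewrite andbF.
by rewrite (BA _ h).
Qed.


Lemma early (S : {set V}) u : u \in V1 -> v \in S -> v \notin u |: Tset x alpha S u ->
  ~~ (alpha * #|~: V1 :&: Tset x alpha S u|%:R / 2 <=
      \sum_(w in ~: V1 :&: Tset x alpha S u) x u w) ->
  \sum_(w in ~: V1 :&: (u |: Tset x alpha S u)) (if pos v w then 1 else 0 : R)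
  <= (4 / mm) * \sum_(w in ~: V1 :&: (u |: Tset x alpha S u)) ee x w.
Proof.
move=> uV1 vS vT hc; prep.
set T := Tset x alpha S u.
have -> : ~: V1 :&: (u |: T) = ~: V1 :&: T.
  apply/setP => w; rewrite !inE; case: (eqVneq w u) => [->|]; by rewrite ?uV1.
have vu : v != u by move: vT; rewrite !inE; case: (v == u).
have xuv : alpha < x u v.
  move: vT; rewrite !inE (negbTE vu) vS /= => h; rewrite ltNge; exact: h.
have hE : 0 <= \sum_(w in ~: V1 :&: T) ee x w by apply: sumr_ge0 => w _; exact: ee_ge0.
have memA w : w \in ~: V1 :&: T -> [/\ w \notin V1, w \in S, w != u & x u w <= alpha].
  by rewrite !inE => /and3P[-> /andP[-> ->] ->].
have [hD|hD] := lerP (x v u) (1 - alpha / 2).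
- apply: (@combine _ _ (alpha / 2) 1); [lra|exact: hE|lra| |].
  + have := mm_le_g; lra.
  + rewrite [X in _ <= X]mul1r; apply: (@sum_scale _ _ _ (fun w => x u w - alpha / 2) _ 1); first lra.
    * rewrite sumrB sumr_const -mulr_natr; move: hc; rewrite -ltNge; lra.
    * move=> w /memA [wV1 wS wu xuw].
      have wv : w != v by apply: contraNneq wV1 => ->.
      have uw : u != w by rewrite eq_sym.
      have vw : v != w by rewrite eq_sym.
      have uv : u != v by rewrite eq_sym.
      have t1 := xtri uw wv uv.
      have t2 := xtri vu uw vw.
      have := x01 v w; have := x01 u w; rewrite (xsym w v) in t1.
      rewrite /ee; case: (pos v w); rewrite ?mulr1 ?mulr0; lra.
- apply: (@combine _ _ (1 / 4) 1); [lra|exact: hE|lra| |].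
  + have := mm_le_g; lra.
  + rewrite [X in _ <= X]mul1r; apply: (@sum_scale _ _ _ (fun w => (0:R)) _ 0); first lra.
    * by rewrite big1.
    * move=> w /memA [wV1 wS wu xuw].
      have wv : w != v by apply: contraNneq wV1 => ->.
      have uw : u != w by rewrite eq_sym.
      have vw : v != w by rewrite eq_sym.
      have uv : u != v by rewrite eq_sym.
      have t1 := xtri uw wv uv.
      have := x01 v w; have := x01 u w; rewrite (xsym w v) (xsym u v) in t1.
      rewrite /ee; case: (pos v w); rewrite ?mulr1 ?mulr0; lra.
Qed.

Definition fcl (cl : {set V}) w := ee (fun a b => if b \in cl then 0 else 1) w.

Lemma memAS (S : {set V}) w : w \in ~: V1 :&: S -> [/\ w \notin V1, w \in S & w != v].
Proof. rewrite !inE => /andP[h ->]; split=> //; apply: contraNneq h => ->. exact: Hv. Qed.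

Lemma ES (S : {set V}) : 0 <= \sum_(w in ~: V1 :&: S) ee x w.
Proof. by apply: sumr_ge0 => w _; exact: ee_ge0. Qed.

Lemma F1 (S : {set V}) : v \in S ->
  alpha * #|~: V1 :&: Tset x alpha S v|%:R / 2 <=
      \sum_(w in ~: V1 :&: Tset x alpha S v) x v w ->
  \sum_(w in ~: V1 :&: S) fcl [set v] w <= (4 / mm) * \sum_(w in ~: V1 :&: S) ee x w.
Proof.
move=> vS hc; prep.
set T := Tset x alpha S v.
apply: (@combine _ _ (alpha / 2) 1); [lra|exact: ES|lra| |].
  have := mm_le_g; lra.
rewrite [X in _ <= X]mul1r.
apply: (@sum_scale _ _ _ (fun w => if w \in T then alpha / 2 - x v w else 0) _ 1); first lra.
  rewrite -big_mkcondr /=.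
  have -> : \sum_(i in ~: V1 :&: S | i \in T) (alpha / 2 - x v i) =
            \sum_(i in ~: V1 :&: T) (alpha / 2 - x v i).
    apply: eq_bigl => w; rewrite !inE.
    by case: (w \in S); rewrite ?andbF ?andbT.
  rewrite sumrB sumr_const -mulr_natr; lra.
move=> w /memAS [wV1 wS wv].
have hT : (w \in T) = (x v w <= alpha) by rewrite !inE wS wv.
have := x01 v w.
rewrite /fcl /ee hT !inE (negbTE wv).
case: (pos v w); case: (lerP (x v w) alpha) => h; rewrite ?mulr1 ?mulr0 ?subr0 ?subrr; lra.
Qed.

Lemma F2 (S : {set V}) : v \in S ->
  \sum_(w in ~: V1 :&: S) fcl (v |: Tset x alpha S v) w <=
  (4 / mm) * \sum_(w in ~: V1 :&: S) ee x w.
Proof.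
move=> vS; prep.
set T := Tset x alpha S v.
apply: (@combine _ _ alpha 1); [lra|exact: ES|lra| |].
  have := mm_le_g; lra.
rewrite [X in _ <= X]mul1r.
apply: (@sum_scale _ _ _ (fun w => (0:R)) _ 0); first lra.
  by rewrite big1.
move=> w /memAS [wV1 wS wv].
have hT : (w \in v |: T) = (x v w <= alpha) by rewrite !inE wS (negbTE wv).
have := x01 v w.
rewrite /fcl /ee hT.
case: (pos v w); case: (lerP (x v w) alpha) => h; rewrite ?mulr1 ?mulr0 ?subr0 ?subrr; lra.
Qed.

Lemma F3 (S : {set V}) u : u \in V1 -> u \in S -> u != v -> v \in Tset x alpha S u ->
  (#|Tstar V1 x gamma S v| <= #|Tstar V1 x gamma S u|)%N ->
  \sum_(w in ~: V1 :&: S) fcl (u |: Tset x alpha S u) w <=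
  (4 / mm) * \sum_(w in ~: V1 :&: S) ee x w.
Proof.
move=> uV1 uS uv vT hmax; prep.
set T := Tset x alpha S u.
set Tv := Tstar V1 x gamma S v.
set Tu := Tstar V1 x gamma S u.
set A := ~: V1 :&: S.
have vu : v != u by rewrite eq_sym.
have xuv : x u v <= alpha by move: vT; rewrite !inE => /andP[_ ->].
have wune w : w \in A -> w != u by move=> /memAS[wV1 _ _]; apply: contraNneq wV1 => ->.
have memT w : w \in A -> (w \in u |: T) = (x u w <= alpha).
  by move=> wA; rewrite !inE (negbTE (wune w wA)) /=; case/memAS: wA => _ -> _.
have memTv w : w \in A -> (w \in Tv) = (x v w <= gamma).
  by move=> wA; rewrite /Tv /Tstar inE -/A wA.
have memTu w : w \in A -> (w \in Tu) = (x u w <= gamma).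
  by move=> wA; rewrite /Tu /Tstar inE -/A wA.
have TvA : Tv \subset A by apply/subsetP => w; rewrite /Tv /Tstar inE => /andP[].
have TuA : Tu \subset A by apply/subsetP => w; rewrite /Tu /Tstar inE => /andP[].
set B := Tv :\: T.
have BA : B \subset A by apply: subset_trans TvA; apply: subsetDl.
pose f1 w : R := if pos v w then (if x u w <= alpha then 0 else if x v w <= gamma then 0 else 1)
                 else (if x u w <= alpha then 1 else 0).
have step1 : \sum_(w in A) fcl (u |: T) w <=
             \sum_(w in A) f1 w + \sum_(w in A) (if w \in B then 1 else 0 : R).
  rewrite -big_split /=; apply: ler_sum => w wA.
  have hB : (w \in B) = (x v w <= gamma) && ~~ (x u w <= alpha).
    rewrite /B inE memTv // andbC; congr (_ && ~~ _).
    by rewrite -(memT w wA) in_setU1 (negbTE (wune w wA)).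
  rewrite /fcl /ee memT // /f1 hB.
  case: (pos v w); case: (x u w <= alpha); case: (x v w <= gamma); simpl;
    rewrite ?subr0 ?subrr; lra.
have step2 : mm * \sum_(w in A) f1 w <= \sum_(w in A) ee x w.
  apply: (@sum_scale _ _ _ (fun w => (0:R)) _ 0); first lra.
    by rewrite big1.
  move=> w wA; case/memAS: (wA) => wV1 wS wv.
  have uw : u != w by rewrite eq_sym; exact: wune.
  have vw : v != w by rewrite eq_sym.
  have t2 := xtri vu uw vw.
  rewrite (xsym v u) in t2.
  have := x01 v w; have := x01 u w; have := mm_le_a; have := mm_le_g; have := mm_gt0.
  rewrite /f1 /ee; case: (pos v w); case: (lerP (x u w) alpha) => h1;
    case: (lerP (x v w) gamma) => h2; rewrite ?mulr1 ?mulr0 ?addr0; lra.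
have card1 : (#|B| <= #|Tu :\: Tv|)%N.
  have c1 := cardsID T Tv.
  have c2 := cardsID Tv Tu.
  have c3 : (#|Tu :&: Tv| <= #|Tv :&: T|)%N.
    apply: subset_leq_card; apply/subsetP => w /setIP [hu hv].
    rewrite in_setI hv /=.
    have wA : w \in A by exact: (subsetP TuA).
    have := memT w wA; rewrite in_setU1 (negbTE (wune w wA)) /= => ->.
    rewrite (memTu w wA) in hu; exact: le_trans hu (ltW Hga).
  rewrite /B -c1 -c2 in hmax *.
  rewrite -(leq_add2l #|Tv :&: T|); apply: leq_trans hmax _.
  by rewrite leq_add2r.
have step3 : mm * #|Tu :\: Tv|%:R <= \sum_(w in A) ee x w.
  apply: le_trans (sum_sub (f:=ee x) _ _).
  - rewrite mulr_natr -sumr_const; apply: ler_sum => w /setDP [hu hv].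
    have wA : w \in A by exact: (subsetP TuA).
    case/memAS: (wA) => wV1 wS wv.
    rewrite (memTu w wA) in hu; rewrite (memTv w wA) in hv.
    have uw : u != w by rewrite eq_sym; exact: wune.
    have vw : v != w by rewrite eq_sym.
    have t2 := xtri vu uw vw.
    rewrite (xsym v u) in t2.
    have := x01 v w; have := mm_le_a; have := mm_le_g.
    rewrite /ee; case: (pos v w); lra.
  - by apply: subset_trans TuA; apply: subsetDl.
  - by move=> w _; exact: ee_ge0.
have hB := sum_ind BA.
apply: (@combine _ _ mm 2); [exact: mm_gt0|exact: ES|lra| |].
  have := mm_gt0; lra.
have : mm * #|B|%:R <= mm * #|Tu :\: Tv|%:R.
  rewrite ler_pM2l; last exact: mm_gt0.
  by rewrite ler_nat.
rewrite hB in step1.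
have h4 : mm * \sum_(w in A) fcl (u |: T) w <=
          mm * \sum_(w in A) f1 w + mm * #|B|%:R.
  by rewrite -mulrDr ler_pM2l //; exact: mm_gt0.
lra.
Qed.

Lemma run_sub (S : {set V}) C : alg2_run V1 x alpha gamma S C ->
  forall A, A \in C -> A \subset S.
Proof.
elim => [S0 hS | S0 u rest Hu Hmax /= Hrun IH] A.
- case/mapP => w; rewrite mem_enum => hw ->.
  by rewrite sub1set; case/setIP: hw.
- rewrite inE => /orP [/eqP -> | hA].
  + case: ifP => _; first by rewrite sub1set; case/setIP: Hu.
    apply/subsetP => w; rewrite !inE => /orP [/eqP -> | /andP [/andP [_ ->] _]] //.
    by case/setIP: Hu.
  + exact: subset_trans (IH A hA) (subsetDl _ _).
Qed.

Lemma inv (S : {set V}) C : alg2_run V1 x alpha gamma S C -> v \in S ->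
  \sum_(w in ~: V1 :&: S) ee (@xC R V C) w <=
  (4 / mm) * \sum_(w in ~: V1 :&: S) ee x w.
Proof.
move=> H; move: (H); elim: H => [S0 hS | S0 u rest Hu Hmax /= Hrun IH] Hfull vS.
- by move: hS => /setP/(_ v); rewrite !inE Hv vS.
- set T := Tset x alpha S0 u.
  set cl := (if _ then [set u] else u |: T).
  have clS : cl \subset S0 by apply: (run_sub Hfull); rewrite inE eqxx.
  have restS := run_sub Hrun.
  case: (boolP (v \in cl)) => vcl.
  + have hx w : @xC R V (cl :: rest) v w = if w \in cl then 0 else 1.
      rewrite /xC /= vcl /=; case: (boolP (w \in cl)) => // wcl.
      case: hasP => // [[A HA /andP[hvA _]]].
      have := subsetP (restS A HA) v hvA; by rewrite inE vcl.
    have -> : \sum_(w in ~: V1 :&: S0) ee (@xC R V (cl :: rest)) w =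
              \sum_(w in ~: V1 :&: S0) fcl cl w.
      by apply: eq_bigr => w _; rewrite /ee /fcl hx.
    have uV1 : u \in V1 by case/setIP: Hu.
    have uS : u \in S0 by case/setIP: Hu.
    move: vcl; rewrite /cl; case: ifP => hc vcl.
    * move: vcl; rewrite inE => /eqP vu; subst u.
      exact: F1.
    * case: (eqVneq v u) => [vu | vu].
        subst u; exact: F2.
      move: vcl; rewrite in_setU1 (negbTE vu) /= => vT.
      apply: F3 => //; first by rewrite eq_sym.
      apply: Hmax; rewrite inE Hv; exact: vS.
  + have vS' : v \in S0 :\: cl by rewrite inE vcl vS.
    have IH' := IH Hrun vS'.
    rewrite (bigID (mem cl)) /= [X in _ <= _ * X](bigID (mem cl)) /= mulrDr.
    apply: lerD.
    * have hA w : (w \in ~: V1 :&: S0) && (w \in cl) = (w \in ~: V1 :&: cl).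
        rewrite !in_setI; case: (boolP (w \in cl)) => h; last by rewrite !andbF.
        by rewrite (subsetP clS w h) !andbT.
      rewrite (eq_bigl _ _ hA) [X in _ <= _ * X](eq_bigl _ _ hA).
      have -> : \sum_(i in ~: V1 :&: cl) ee (@xC R V (cl :: rest)) i =
                \sum_(i in ~: V1 :&: cl) (if pos v i then 1 else 0 : R).
        apply: eq_bigr => w /setIP [_ wcl]; rewrite /ee.
        have -> : @xC R V (cl :: rest) v w = 1.
          rewrite /xC /= (negbTE vcl) /=.
          case: hasP => // [[A HA /andP[_ hwA]]].
          have := subsetP (restS A HA) w hwA; by rewrite inE wcl.
        by case: (pos v w); rewrite ?subrr.
      have uV1 : u \in V1 by case/setIP: Hu.
      move: vcl; rewrite /cl; case: ifP => hc vcl.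
      - rewrite !big_pred0 ?mulr0 // => w; rewrite !inE;
          by case: (eqVneq w u) => [->|]; rewrite ?uV1 ?andbF.
      - apply: early => //; by rewrite hc.
    * have hA w : (w \in ~: V1 :&: S0) && (w \notin cl) = (w \in ~: V1 :&: (S0 :\: cl)).
        by rewrite !in_setI in_setD; case: (w \in cl); rewrite ?andbF ?andbT.
      rewrite (eq_bigl _ _ hA) [X in _ <= _ * X](eq_bigl _ _ hA).
      apply: le_trans IH'.
      rewrite le_eqVlt; apply/orP; left; apply/eqP; apply: eq_bigr => w /setIP [_ /setDP [_ wcl]].
      by rewrite /ee /xC /= (negbTE vcl).
Qed.

Lemma err_eq (y : V -> V -> R) : err V1 pos y v = \sum_(w in ~: V1) ee y w.
Proof.
rewrite /err (bigID (fun w => pos v w) (mem (~: V1))) /=.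
congr (_ + _); apply: eq_big => w; rewrite ?inE /crossing Hv /=.
- by case: (w \in V1).
- by move=> /andP [_ h]; rewrite /ee h.
- by case: (w \in V1).
- by move=> /andP [_ h]; rewrite /ee (negbTE h).
Qed.
End P.


Theorem theorem2 (R : realType) (alpha gamma : R) :
  0 < gamma -> gamma < alpha -> alpha < 1 / 2 ->
  exists c : R,
    forall (V : finType) (V1 : {set V}) (pos : V -> V -> bool)
           (x : V -> V -> R) (C : seq {set V}),
      labels_symmetric pos ->
      fractional_clustering x ->
      alg2_run V1 x alpha gamma [set: V] C ->
      forall v, v \in V1 ->
        err V1 pos (@xC R V C) v <= c * err V1 pos x v.
Proof.
move=> Hg Hga Ha; exists (4 / mm alpha gamma).
move=> V V1 pos x C _ Hx Hrun v Hv.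
rewrite !(err_eq pos Hv).
have := inv Hg Hga Ha pos Hx Hv Hrun (in_setT v).
by rewrite setIT.
Qed.
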